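(* Let $\lambda=(\lambda_1\ge\lambda_2\ge\cdots\ge\lambda_n\ge0)$ be integers and $a_k=\lambda_k-\lambda_{k+1}$ ($1\le k\le n$, $\lambda_{n+1}=0$). The linear map $\phi$ sending an $n\times n$ integer matrix $(a_{ij})$ to the array $(\lambda_{ij})_{i+j\le n+1}$ with $\lambda_{ij}=\sum_{l=j}^{n+1-i}a_{il}$ restricts to a bijection from $\Upsilon_\lambda$ onto $\Pi_\lambda$. In particular, $\phi$ identifies $\mathrm{conv}(\Upsilon_\lambda)$ with the Gel'fand–Cetlin polytope $P_\lambda$.
   Context: For $I=\{i_1<\cdots<i_k\}\subseteq\{1,\ldots,n\}$, $\alpha_I\in\mathbb{Z}^{n\times n}$ is the exponent matrix of the antidiagonal monomial $\prod_{r=1}^kz_{r,i_{k+1-r}}$ of the minor of the generic matrix $(z_{ij})$ with rows $1,\ldots,k$ and columns $I$ (so $\alpha_I$ has entry $1$ at positions $(r,i_{k+1-r})$, $r=1,\ldots,k$, and $0$ elsewhere). $\Upsilon_\lambda$ is the set of all matrices $\sum_{s}\alpha_{I_s}$, where $(I_s)_s$ is a finite list of nonempty subsets of $\{1,\ldots,n\}$ containing exactly $a_k$ subsets of size $k$ for each $k$. A Gel'fand–Cetlin pattern for $\lambda$ is a real array $(\lambda_{i,j})_{i,j\ge1,\,i+j\le n+1}$ with $\lambda_{i,1}=\lambda_i$ for all $i$ and $\lambda_{i,j}\ge\lambda_{i,j+1}\ge\lambda_{i+1,j}$ whenever these entries are defined. $\Pi_\lambda$ is the set of integer Gel'fand–Cetlin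 patterns for $\lambda$, and the Gel'fand–Cetlin polytope is $P_\lambda=\mathrm{conv}(\Pi_\lambda)$. *)

(* Defs.v *)
From HB Require Import structures.
From mathcomp Require Import all_boot all_order all_algebra.
Set Implicit Arguments. Unset Strict Implicit. Unset Printing Implicit Defensive.
Import Order.TTheory GRing.Theory Num.Theory.
Local Open Scope ring_scope.

(* Conventions: indices are 0-based ('I_n), so row/column r+1 of the paper is
   r here.  Arrays (lambda_{ij})_{i+j<=n+1} are encoded as n x n matrices whose
   entries outside the triangle {(i,j) | i + j < n} (0-based) are 0. *)

(* lam i = lambda_{i+1}; lam_next i = lambda_{i+2}, with lambda_{n+1} = 0 *)
Definition lam_next (n : nat) (R : numDomainType) (lam : 'I_n -> R) (i : 'I_n) : R :=
  if (i.+1 < n)%N then lam (insubd i i.+1) else 0.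

Definition acoef (n : nat) (lam : 'I_n -> int) (k : 'I_n) : nat :=
  absz (lam k - lam_next lam k).

(* the increasing enumeration i_1 < ... < i_k of I (as naturals, 0-based) *)
Definition sorted_elems (n : nat) (I : {set 'I_n}) : seq nat :=
  [seq val i | i <- enum 'I_n & i \in I].

(* alpha_I : entry 1 at positions (r, i_{k+1-r}), r = 1..k (1-based) *)
Definition alpha (n : nat) (I : {set 'I_n}) : 'M[int]_n :=
  \matrix_(r < n, c < n)
    (if (r < #|I|)%N && ((c : nat) == nth 0%N (sorted_elems I) (#|I|.-1 - r))
     then 1 else 0).

Definition Upsilon (n : nat) (lam : 'I_n -> int) (A : 'M[int]_n) : Prop :=
  exists Is : seq {set 'I_n},
    all (fun I : {set 'I_n} => I != set0) Is /\
    (forall k : 'I_n, count (fun I : {set 'I_n} => #|I| == k.+1) Is = acoef lam k) /\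
    A = \sum_(I <- Is) alpha I.

Definition phi (R : pzRingType) (n : nat) (A : 'M[R]_n) : 'M[R]_n :=
  \matrix_(i < n, j < n)
    (if (i + j < n)%N then \sum_(l < n | (j <= l)%N && (l <= n.-1 - i)%N) A i l
     else 0).

Definition GC_pattern (R : realDomainType) (n : nat) (lam : 'I_n -> R)
    (P : 'M[R]_n) : Prop :=
  (forall i j : 'I_n, (n <= i + j)%N -> P i j = 0) /\
  (forall i : 'I_n, forall j0 : 'I_n, (j0 : nat) = 0%N -> P i j0 = lam i) /\
  (forall i j : 'I_n, (i + j.+1 < n)%N ->
     P i (insubd j j.+1) <= P i j /\ P (insubd i i.+1) j <= P i (insubd j j.+1)).

Definition Pi (n : nat) (lam : 'I_n -> int) (P : 'M[int]_n) : Prop :=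
  GC_pattern lam P.

Definition conv (R : realFieldType) (n : nat) (S : 'M[R]_n -> Prop)
    (x : 'M[R]_n) : Prop :=
  exists (m : nat) (w : 'I_m -> R) (p : 'I_m -> 'M[R]_n),
    (forall t, 0 <= w t) /\ \sum_t w t = 1 /\ (forall t, S (p t)) /\
    x = \sum_t w t *: p t.

Definition intmx_set (R : realFieldType) (n : nat) (S : 'M[int]_n -> Prop)
    (x : 'M[R]_n) : Prop :=
  exists A, S A /\ x = map_mx (fun z : int => z%:~R) A.

(* Main.v *)
Require Import Defs.
From HB Require Import structures.
From mathcomp Require Import all_boot all_order all_algebra zify.
Import Order.TTheory GRing.Theory Num.Theory.
Local Open Scope ring_scope.

Module Helpers.
Set Implicit Arguments. Unset Strict Implicit.

Lemma count_orD (T : Type) (p q : pred T) (s : seq T) :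
  (forall x, ~~ (p x && q x)) ->
  count (fun x => p x || q x) s = (count p s + count q s)%N.
Proof.
move=> H; elim: s => //= x s ->; have := H x.
by case: (p x); case: (q x) => //= _; lia.
Qed.

Lemma count_iota_all (p : pred nat) m k :
  (forall x, (m <= x < m + k)%N -> p x) -> count p (iota m k) = k.
Proof.
move=> H; rewrite -[RHS](size_iota m k); apply/eqP; rewrite -all_count.
by apply/allP => x; rewrite mem_iota => /H.
Qed.

Lemma count_iota_none (p : pred nat) m k :
  (forall x, (m <= x < m + k)%N -> ~~ p x) -> count p (iota m k) = 0%N.
Proof.
move=> H; rewrite (@eq_in_count _ _ pred0) ?count_pred0 // => x.
by rewrite mem_iota => /H /negbTE ->.
Qed.

Lemma count_itv (a b L : nat) : (a <= b <= L)%N ->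
  count (fun t => (a < t) && (t <= b))%N (iota 1 L) = (b - a)%N.
Proof.
move=> /andP[hab hbL].
have -> : L = (a + ((b - a) + (L - b)))%N by lia.
rewrite iotaD iotaD.
rewrite !count_cat count_iota_none; last by move=> x hx; apply/negP; lia.
rewrite count_iota_all; last by move=> x hx; lia.
rewrite count_iota_none; last by move=> x hx; apply/negP; lia.
by rewrite add0n addn0.
Qed.

Lemma down_count (q : pred nat) n : (forall r, q r.+1 -> q r) ->
  (forall r, (n <= r)%N -> ~~ q r) ->
  forall r, q r = (r < count q (iota 0 n))%N.
Proof.
move=> Hd; elim: n => [|n IH] Hn r.
  by rewrite /= (negbTE (Hn r (leq0n r))).
have -> : iota 0 n.+1 = iota 0 n ++ [:: n] by rewrite -addn1 iotaD.
rewrite count_cat /=.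
case Hq: (q n).
  have Hall : forall d r, (r + d)%N = n -> q r.
    elim=> [|d IHd] r' hr; first by rewrite addn0 in hr; rewrite hr.
    apply: Hd; apply: IHd; lia.
  rewrite count_iota_all; last by move=> x hx; apply: (Hall (n - x)%N); lia.
  rewrite /= addn0 addn1.
  case: (ltnP r n.+1) => hr.
    rewrite (Hall (n - r)%N); last lia.
    by [].
  by rewrite (negbTE (Hn r _)).
rewrite /= !addn0; apply: IH => r' hr'.
case: (ltnP n r') => h; first by apply: Hn.
have -> : r' = n by lia.
by rewrite Hq.
Qed.

Lemma tele_count (M : nat -> nat) :
  (forall j, M j.+1 <= M j <= (M j.+1).+1)%N ->
  forall len j, M (j + len)%N = 0%N ->
  count (fun x => M x.+1 < M x)%N (iota j len) = M j.
Proof.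
move=> HM; elim=> [|len IH] j H0 /=; first by rewrite addn0 in H0.
rewrite IH; last by rewrite addSnnS.
have := HM j; case: ltnP => /=; lia.
Qed.

Lemma head_bound n x s : sorted ltn (x :: s) ->
  all (fun y => y < n)%N (x :: s) -> (x + size (x :: s) <= n)%N.
Proof.
elim: s x => [|y s IH] x /=; first by rewrite andbT addn1.
move=> /andP[hxy hs] /andP[hx hall].
have := IH y hs hall; rewrite /=; lia.
Qed.

Lemma nth_bound n s m : sorted ltn s -> all (fun y => y < n)%N s ->
  (m < size s)%N -> (nth 0%N s m + (size s - m) <= n)%N.
Proof.
elim: s m => [|x s IH] m //= hs /andP[hx hall] hm.
case: m hm => [|m] hm /=.
  have := @head_bound n x s hs; rewrite /= hx hall /= => /(_ isT); lia.
rewrite subSS; apply: IH => //; exact: path_sorted hs.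
Qed.

Lemma nth_count j s m : sorted leq s -> (m < size s)%N ->
  (j <= nth 0%N s m)%N = (size s <= m + count (leq j) s)%N.
Proof.
elim: s m => [|x s IH] m //= hs hm.
have hall : all (leq x) s := order_path_min leq_trans hs.
have hcs := count_size (leq j) s.
case: (leqP j x) => hjx.
  have hc : count (leq j) s = size s.
    apply/eqP; rewrite -all_count; apply/allP => y hy.
    have := allP hall y hy; rewrite /=; lia.
  rewrite hc; case: m hm => [|m] hm /=; first by apply/idP/idP => _; lia.
  have := allP hall (nth 0%N s m) (mem_nth 0%N (hm : (m < size s)%N)).
  by move=> h; apply/idP/idP => _; lia.
case: m hm => [|m] hm /=; first by apply/idP/idP; lia.
rewrite IH //.
exact: path_sorted hs.
Qed.

Lemma cardc n (I : {set 'I_n}) : #|I| = count (mem I) (enum 'I_n).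
Proof.
rewrite cardE -size_filter /enum_mem; congr size.
by rewrite -filter_predI; apply: eq_filter => x /=; rewrite andbT.
Qed.

Lemma se_sorted n (I : {set 'I_n}) : sorted ltn (sorted_elems I).
Proof.
rewrite /sorted_elems.
apply: (subseq_sorted ltn_trans _ (iota_ltn_sorted 0 n)).
rewrite -val_enum_ord; apply: map_subseq; exact: filter_subseq.
Qed.

Lemma se_size n (I : {set 'I_n}) : size (sorted_elems I) = #|I|.
Proof. by rewrite /sorted_elems size_map size_filter cardc. Qed.

Lemma se_lt n (I : {set 'I_n}) : all (fun y => y < n)%N (sorted_elems I).
Proof. by apply/allP => x /mapP[i _ ->]; apply: ltn_ord. Qed.


Definition NN n (I : {set 'I_n}) (j : nat) := count (leq j) (sorted_elems I).

Lemma sum_ind n (P : pred nat) (c : nat) :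
  \sum_(l < n | P l) (if val l == c then 1 else 0 : int) =
  if (c < n)%N && P c then 1 else 0.
Proof.
case: (ltnP c n) => hc /=.
  rewrite big_mkcond (bigD1 (Ordinal hc)) //= eqxx big1 ?addr0 //.
  move=> l hl; case: ifP => // _; case: eqP => // hlc.
  by case/eqP: hl; apply: val_inj.
rewrite big1 // => l _; case: eqP => // hlc.
by have := ltn_ord l; rewrite hlc ltnNge hc.
Qed.

Lemma phi_alpha n (I : {set 'I_n}) (r j : 'I_n) : (r + j < n)%N ->
  phi (alpha I) r j = (if (r < NN I j)%N then 1 else 0).
Proof.
move=> hrj; rewrite mxE hrj.
under eq_bigr => l _ do rewrite mxE.
have hsz := se_size I; have hso := se_sorted I; have hlt := se_lt I.
rewrite /NN; set s := sorted_elems I in hsz hso hlt *.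
have hcs := count_size (leq j) s.
case: (ltnP r #|I|) => hr.
  set m := (#|I|.-1 - r)%N.
  have hm : (m < size s)%N by rewrite hsz /m; lia.
  have hb := nth_bound hso hlt hm.
  have hnc := nth_count j (sub_sorted ltnW hso) hm.
  set c := nth 0%N s m in hb hnc *.
  rewrite (eq_bigr (fun l : 'I_n => if val l == c then 1 else 0)); last first.
    by [].
  rewrite (@sum_ind n (fun l => (j <= l <= n.-1 - r)%N)).
  have -> : (c < n)%N by lia.
  have -> : (c <= n.-1 - r)%N by lia.
  rewrite andbT hnc.
  have -> : (size s <= m + count (leq j) s)%N = (r < count (leq j) s)%N.
    by apply/idP/idP; lia.
  by [].
rewrite big1; last by [].
have -> : (r < count (leq j) s)%N = false by apply/negP; lia.
by [].
Qed.

Lemma alpha_tri n (I : {set 'I_n}) (r c : 'I_n) : (n <= r + c)%N -> alpha I r c = 0.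
Proof.
move=> hrc; rewrite mxE; case: ifP => // /andP[hr /eqP hc]; exfalso.
have hsz := se_size I; have hso := se_sorted I; have hlt := se_lt I.
have hm : (#|I|.-1 - r < size (sorted_elems I))%N by rewrite hsz; lia.
have := nth_bound hso hlt hm; rewrite -hc hsz; lia.
Qed.

Lemma NN0 n (I : {set 'I_n}) : NN I 0 = #|I|.
Proof. by rewrite /NN -se_size -count_predT; apply: eq_count. Qed.

Lemma NN_mono n (I : {set 'I_n}) j : (NN I j.+1 <= NN I j)%N.
Proof. by apply: sub_count => x /= h; apply: ltnW. Qed.

Lemma NN_step n (I : {set 'I_n}) j : (NN I j <= (NN I j.+1).+1)%N.
Proof.
rewrite /NN.
rewrite (eq_count (a2 := fun x => (j.+1 <= x)%N || (x == j))); last first.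
  by move=> x /=; rewrite leq_eqVlt orbC eq_sym.
rewrite count_orD; last by move=> x; apply/negP => /andP[h /eqP e]; lia.
have hu := sorted_uniq ltn_trans ltnn (se_sorted I).
have := count_uniq_mem j hu.
rewrite (eq_count (a2 := fun x => x == j)) // => ->.
by case: (_ \in _); rewrite ?addn1 ?addn0.
Qed.

Section PhiLin.
Variables (R : pzRingType) (n : nat).
Implicit Types A B : 'M[R]_n.

Lemma phiD A B : phi (A + B) = phi A + phi B.
Proof.
apply/matrixP=> i j; rewrite !mxE; case: ifP => _; last by rewrite addr0.
by rewrite -big_split /=; apply: eq_bigr => l _; rewrite mxE.
Qed.

Lemma phi0 : phi (0 : 'M[R]_n) = 0.
Proof.
apply/matrixP=> i j; rewrite !mxE; case: ifP => // _.
by rewrite big1 // => l _; rewrite mxE.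
Qed.

Lemma phiZ a A : phi (a *: A) = a *: phi A.
Proof.
apply/matrixP=> i j; rewrite !mxE; case: ifP => _; last by rewrite mulr0.
by rewrite mulr_sumr; apply: eq_bigr => l _; rewrite mxE.
Qed.

Lemma phiB A B : phi (A - B) = phi A - phi B.
Proof. by rewrite -scaleN1r phiD phiZ scaleN1r. Qed.

Lemma phi_sum (I : Type) (s : seq I) (P : pred I) (F : I -> 'M[R]_n) :
  phi (\sum_(x <- s | P x) F x) = \sum_(x <- s | P x) phi (F x).
Proof. exact: (big_morph _ phiD phi0). Qed.

Definition tri A := forall i j : 'I_n, (n <= i + j)%N -> A i j = 0.

Lemma phi_inj A B : tri A -> tri B -> phi A = phi B -> A = B.
Proof.
move=> hA hB hphi; apply/eqP; rewrite -subr_eq0; apply/eqP.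
set C := A - B.
have hC : tri C by move=> i j h; rewrite !mxE hA // hB // subr0.
have hpC : phi C = 0 by rewrite phiB hphi subrr.
apply/matrixP=> i j; rewrite [RHS]mxE.
pose S k := \sum_(l < n | (k <= l)%N) C i l.
have HS : forall k, S k = 0.
  move=> k; case: (ltnP (i + k) n) => hk.
    have hkn : (k < n)%N by lia.
    have := congr1 (fun M : 'M[R]_n => M i (Ordinal hkn)) hpC.
    rewrite [RHS]mxE mxE /= hk => <-.
    rewrite /S big_mkcond [RHS]big_mkcond; apply: eq_bigr => l _.
    case: (leqP k l) => hkl //=.
    case: (leqP l (n.-1 - i)) => hl //=.
    by rewrite hC //; lia.
  by rewrite /S big1 // => l hl; rewrite hC //; lia.
have := HS j; rewrite /S (bigD1 j) //=.
rewrite (eq_bigl (fun l : 'I_n => (j.+1 <= l)%N)); last first.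
  move=> l /=; rewrite ltn_neqAle andbC; congr (_ && _).
  by rewrite eq_sym.
by have := HS j.+1; rewrite /S => ->; rewrite addr0.
Qed.

End PhiLin.

Lemma phi_map n (A : 'M[int]_n) (R : pzRingType) :
  phi (map_mx (fun z : int => z%:~R : R) A) = map_mx (fun z : int => z%:~R) (phi A).
Proof.
apply/matrixP=> i j; rewrite !mxE; case: ifP => _; last by rewrite mulr0z.
rewrite (big_morph (fun z : int => z%:~R : R) (@intrD R) (mulr0z 1)).
by apply: eq_bigr => l _; rewrite mxE.
Qed.

Lemma sum_count (T : Type) (p : pred T) (s : seq T) :
  \sum_(x <- s) (if p x then 1 else 0 : int) = (count p s)%:Z.
Proof.
elim: s => [|x s IH]; first by rewrite big_nil.
by rewrite big_cons IH /=; case: (p x); rewrite ?add0r // addrC -intS.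
Qed.

Lemma le_ind (a b : bool) : (a -> b) -> (if a then 1 else 0 : int) <= (if b then 1 else 0).
Proof. by case: a; case: b => // /(_ isT). Qed.

Lemma Upsilon_tri n (lam : 'I_n -> int) A : Upsilon lam A -> tri A.
Proof.
case=> Is [_ [_ ->]] i j hij; rewrite summxE big1_seq // => I _.
exact: alpha_tri.
Qed.

Section Into.
Variables (n : nat) (lam : 'I_n -> int).
Hypothesis lam_nonincr : forall i j : 'I_n, (i <= j)%N -> lam j <= lam i.
Hypothesis lam_nonneg : forall i : 'I_n, 0 <= lam i.

Lemma lam_next_le (k : 'I_n) : lam_next lam k <= lam k.
Proof.
rewrite /lam_next; case: ifP => h; last exact: lam_nonneg.
by apply: lam_nonincr; rewrite val_insubd h.
Qed.

Lemma acoefE (k : 'I_n) : (acoef lam k)%:Z = lam k - lam_next lam k.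
Proof. by rewrite /acoef gez0_abs // subr_ge0 lam_next_le. Qed.

Lemma tele_lam (i : 'I_n) : \sum_(k < n | (i <= k)%N) (acoef lam k)%:Z = lam i.
Proof.
pose Lf (m : nat) := if (m < n)%N then lam (insubd i m) else 0.
have hL : forall k : 'I_n, lam k = Lf k by move=> k; rewrite /Lf ltn_ord valKd.
have hLn : forall k : 'I_n, lam_next lam k = Lf k.+1.
  move=> k; rewrite /lam_next /Lf; case: ifP => // h; congr lam.
  by apply: val_inj; rewrite !val_insubd h.
rewrite (eq_bigr (fun k : 'I_n => - (Lf k.+1 - Lf k))); last first.
  by move=> k _; rewrite acoefE hLn hL opprB.
rewrite sumrN.
rewrite (eq_bigl (fun k : 'I_n => true && (i <= k)%N)) //.
rewrite -(big_geq_mkord i n xpredT (fun k => Lf k.+1 - Lf k)).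
rewrite telescope_sumr; last exact: ltnW.
by rewrite /Lf ltnn ltn_ord valKd sub0r opprK.
Qed.

Lemma Pi_of_Upsilon A : Upsilon lam A -> Pi lam (phi A).
Proof.
move=> hU; have htri := Upsilon_tri hU.
case: hU => Is [hne [hcnt hA]].
have Hent : forall r j : 'I_n, (r + j < n)%N ->
    phi A r j = \sum_(I <- Is) (if (r < NN I j)%N then 1 else 0).
  move=> r j hrj; rewrite hA phi_sum summxE.
  by apply: eq_bigr => I _; rewrite phi_alpha.
split; [|split].
- by move=> i j hij; rewrite mxE ltnNge hij.
- move=> i j0 hj0; rewrite Hent; last by rewrite hj0 addn0.
  rewrite (eq_big_seq (fun I : {set 'I_n} => \sum_(k < n | (i <= k)%N)
                (if #|I| == k.+1 then 1 else 0 : int))); last first.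
    move=> I hI; rewrite hj0 NN0.
    have h1 : (0 < #|I|)%N by rewrite card_gt0; exact: (allP hne).
    have h2 : (#|I| <= n)%N by rewrite -[n in (_ <= n)%N]card_ord max_card.
    rewrite (eq_bigr (fun k : 'I_n => if val k == #|I|.-1 then 1 else 0)); last first.
      by move=> k _; congr (if _ then _ else _); apply/eqP/eqP => h; [rewrite h | rewrite h prednK].
    rewrite (@sum_ind n _ #|I|.-1).
    have -> : (#|I|.-1 < n)%N by lia.
    rewrite /=; congr (if _ then _ else _); by rewrite -[RHS]ltnS prednK.
  rewrite exchange_big /= -tele_lam; apply: eq_bigr => k _.
  by rewrite sum_count hcnt.
- move=> i j hij.
  have hj1 : val (insubd j j.+1) = j.+1 by rewrite val_insubd (_ : (j.+1 < n)%N) //; lia.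
  have hi1 : val (insubd i i.+1) = i.+1 by rewrite val_insubd (_ : (i.+1 < n)%N) //; lia.
  split.
    rewrite !Hent ?hj1; try lia.
    apply: ler_sum => I _; apply: le_ind => h.
    exact: leq_trans h (NN_mono I j).
  rewrite !Hent ?hj1 ?hi1; try lia.
  apply: ler_sum => I _; apply: le_ind => h.
  have := NN_step I j; lia.
Qed.

End Into.

Lemma insubd_eq n (u v : 'I_n) x : (x < n)%N -> insubd u x = insubd v x.
Proof. by move=> h; apply: val_inj; rewrite !val_insubd h. Qed.

Section Onto.
Variables (n : nat) (lam : 'I_n -> int).
Hypothesis lam_nonincr : forall i j : 'I_n, (i <= j)%N -> lam j <= lam i.
Hypothesis lam_nonneg : forall i : 'I_n, 0 <= lam i.
Variable P : 'M[int]_n.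
Hypothesis hz : forall i j : 'I_n, (n <= i + j)%N -> P i j = 0.
Hypothesis h0 : forall i j0 : 'I_n, (j0 : nat) = 0%N -> P i j0 = lam i.
Hypothesis hgc : forall i j : 'I_n, (i + j.+1 < n)%N ->
     P i (insubd j j.+1) <= P i j /\ P (insubd i i.+1) j <= P i (insubd j j.+1).
Variable o0 : 'I_n.
Hypothesis ho0 : val o0 = 0%N.

Definition Pn (r j : nat) : int :=
  if (r < n)%N && (j < n)%N then P (insubd o0 r) (insubd o0 j) else 0.

Lemma PnE (i j : 'I_n) : Pn i j = P i j.
Proof. by rewrite /Pn !ltn_ord !valKd. Qed.

Lemma Pn_out r j : (n <= r + j)%N -> Pn r j = 0.
Proof.
move=> h; rewrite /Pn; case: ifP => // /andP[hr hj].
by apply: hz; rewrite !val_insubd hr hj.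
Qed.

Lemma Pn_row r j : (r + j.+1 < n)%N -> Pn r j.+1 <= Pn r j.
Proof.
move=> h; rewrite /Pn.
have hr : (r < n)%N by lia.
have hj : (j < n)%N by lia.
have hj1 : (j.+1 < n)%N by lia.
rewrite hr hj hj1 /=.
have := hgc (i := insubd o0 r) (j := insubd o0 j); rewrite !val_insubd hr hj.
by move=> /(_ h) [+ _]; rewrite (insubd_eq (insubd o0 j) o0 hj1).
Qed.

Lemma Pn_col r j : (r + j.+1 < n)%N -> Pn r.+1 j <= Pn r j.+1.
Proof.
move=> h; rewrite /Pn.
have hr : (r < n)%N by lia.
have hr1 : (r.+1 < n)%N by lia.
have hj : (j < n)%N by lia.
have hj1 : (j.+1 < n)%N by lia.
rewrite hr hj hj1 hr1 /=.
have := hgc (i := insubd o0 r) (j := insubd o0 j); rewrite !val_insubd hr hj.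
move=> /(_ h) [_]; rewrite (insubd_eq (insubd o0 j) o0 hj1).
by rewrite (insubd_eq (insubd o0 r) o0 hr1).
Qed.

Lemma Pn_0 r : (r < n)%N -> Pn r 0 = lam (insubd o0 r).
Proof.
move=> hr; rewrite /Pn hr (_ : (0 < n)%N) /=; last by rewrite -ho0 ltn_ord.
by apply: h0; rewrite val_insubd (_ : (0 < n)%N) // -ho0 ltn_ord.
Qed.

Lemma Pn_ge0 j r : 0 <= Pn r j.
Proof.
elim: j r => [|j IH] r.
  case: (ltnP r n) => hr; first by rewrite Pn_0.
  by rewrite Pn_out //; lia.
case: (ltnP (r + j.+1) n) => h; last by rewrite Pn_out.
exact: le_trans (IH r.+1) (Pn_col h).
Qed.

Lemma Pn_le j r : Pn r j <= lam o0.
Proof.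
elim: j r => [|j IH] r.
  case: (ltnP r n) => hr; last by rewrite Pn_out //; lia.
  by rewrite Pn_0 //; apply: lam_nonincr; rewrite ho0.
case: (ltnP (r + j.+1) n) => h; last by rewrite Pn_out.
exact: le_trans (Pn_row h) (IH r).
Qed.

Definition qq (t : nat) (j r : nat) : bool := (t%:Z <= Pn r j).
Definition MM (t : nat) (j : nat) : nat := count (qq t j) (iota 0 n).

Variable t : nat.
Hypothesis ht : (0 < t)%N.

Lemma qq_out j r : (n <= r + j)%N -> ~~ qq t j r.
Proof. by move=> h; rewrite /qq Pn_out // -ltNge ltz_nat. Qed.

Lemma qq_down j r : qq t j r.+1 -> qq t j r.
Proof.
rewrite /qq => h; case: (ltnP (r.+1 + j) n) => hr.
  have h' : (r + j.+1 < n)%N by lia.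
  exact: le_trans (le_trans h (Pn_col h')) (Pn_row h').
by move: h; rewrite Pn_out // lez_nat; lia.
Qed.

Lemma qqM j r : qq t j r = (r < MM t j)%N.
Proof.
apply: down_count => [r'|r' hr']; first exact: qq_down.
by apply: qq_out; lia.
Qed.

Lemma MM_step j : (MM t j.+1 <= MM t j <= (MM t j.+1).+1)%N.
Proof.
apply/andP; split.
  apply: sub_count => r; rewrite /qq => h.
  case: (ltnP (r + j.+1) n) => hr; first exact: le_trans h (Pn_row hr).
  by move: h; rewrite Pn_out // lez_nat; lia.
case hm: (MM t j) => [|[|m]] //.
have hq : qq t j m.+1 by rewrite qqM hm.
have hin : (m.+1 + j < n)%N by apply: contraTT hq => h; apply: qq_out; lia.
have : qq t j.+1 m.
  rewrite /qq; apply: le_trans hq _; apply: Pn_col; lia.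
by rewrite qqM => h; lia.
Qed.

Lemma MM_out j : (n <= j)%N -> MM t j = 0%N.
Proof.
move=> h; apply: count_iota_none => r _; apply: qq_out; lia.
Qed.

Definition It : {set 'I_n} := [set x : 'I_n | (MM t (val x).+1 < MM t x)%N].

Lemma NN_It j : (j <= n)%N -> NN It j = MM t j.
Proof.
move=> hj; rewrite /NN /sorted_elems count_map count_filter.
rewrite (eq_count (a2 := (fun x => (j <= x)%N && (MM t x.+1 < MM t x)%N) \o val)); last first.
  by move=> x /=; rewrite inE.
rewrite -count_map val_enum_ord.
have -> : iota 0 n = iota 0 j ++ iota j (n - j) by rewrite -iotaD subnKC.
rewrite count_cat count_iota_none; last by move=> x hx; apply/negP => /andP[h _]; lia.
rewrite add0n (@eq_in_count _ _ (fun x => MM t x.+1 < MM t x)%N); last first.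
  by move=> x; rewrite mem_iota => /andP[h _] /=; rewrite h.
apply: tele_count; first exact: MM_step.
by apply: MM_out; lia.
Qed.

Lemma card_It : #|It| = MM t 0.
Proof. by rewrite -NN0 NN_It. Qed.

Lemma phi_alpha_It (r j : 'I_n) : (r + j < n)%N ->
  phi (alpha It) r j = if t%:Z <= P r j then 1 else 0.
Proof.
move=> h; rewrite phi_alpha // NN_It; last exact: ltnW.
by rewrite -qqM /qq PnE.
Qed.

End Onto.

Lemma onto n (lam : 'I_n -> int)
    (lam_nonincr : forall i j : 'I_n, (i <= j)%N -> lam j <= lam i)
    (lam_nonneg : forall i : 'I_n, 0 <= lam i) P :
  Pi lam P -> exists A, Upsilon lam A /\ phi A = P.
Proof.
case=> hz [h0 hgc].
case: (posnP n) => hn.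
  subst n; exists 0; split.
    exists [::]; split => //; split; first by case.
    by rewrite big_nil.
  by apply/matrixP => -[].
pose o0 := Ordinal hn.
have ho0 : val o0 = 0%N by [].
pose L := `|lam o0|%N.
have hL : lam o0 = L%:Z by rewrite /L gez0_abs.
have hnn : forall k : 'I_n, 0 <= lam_next lam k.
  by move=> k; rewrite /lam_next; case: ifP.
pose Is := [seq It P o0 t | t <- iota 1 L].
exists (\sum_(I <- Is) alpha I); split.
  exists Is; split; [|split] => //.
    apply/allP => I /mapP[t ht ->].
    have ht0 : (0 < t)%N by move: ht; rewrite mem_iota; lia.
    rewrite -card_gt0 (card_It hz hgc ho0 ht0) -(qqM hz hgc ho0 ht0) /qq.
    rewrite (Pn_0 h0 ho0 hn) (valKd o0 o0) hL lez_nat.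
    by move: ht; rewrite mem_iota; lia.
  move=> k; rewrite count_map.
  have hb := lam_nonneg k; have ha := hnn k.
  have hab := lam_next_le lam_nonincr lam_nonneg k.
  have hbL : lam k <= lam o0 by apply: lam_nonincr.
  rewrite -(gez0_abs hb) -(gez0_abs ha) in hab *.
  rewrite hL -(gez0_abs hb) in hbL.
  rewrite lez_nat in hab hbL.
  rewrite (@eq_in_count _ _ (fun t => (`|lam_next lam k|%N < t) && (t <= `|lam k|%N))%N); last first.
    move=> t; rewrite mem_iota => /andP[ht1 _].
    rewrite /preim /= (card_It hz hgc ho0 ht1).
    have e1 := qqM hz hgc ho0 ht1 0 k.
    have e2 := qqM hz hgc ho0 ht1 0 k.+1.
    have f1 : qq P o0 t 0 k = (t <= `|lam k|%N)%N.
      by rewrite /qq (Pn_0 h0 ho0 (ltn_ord k)) (valKd o0 k) -{1}(gez0_abs hb) lez_nat.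
    have f2 : qq P o0 t 0 k.+1 = (t <= `|lam_next lam k|%N)%N.
      rewrite /qq; have -> : Pn P o0 k.+1 0 = lam_next lam k.
        rewrite /lam_next; case: ifP => h.
          by rewrite (Pn_0 h0 ho0 h) (insubd_eq o0 k h).
        by rewrite (Pn_out hz) //; lia.
      by rewrite -{1}(gez0_abs ha) lez_nat.
    rewrite -f1 e1 ltnNge -f2 e2.
    by apply/idP/idP; lia.
  rewrite count_itv; last by apply/andP; split => //; rewrite -lez_nat.
  by rewrite /acoef -(gez0_abs hb) -(gez0_abs ha) subzn // absz_nat.
apply/matrixP => i j; case: (ltnP (i + j) n) => hij.
  rewrite phi_sum summxE big_map.
  rewrite (eq_big_seq (fun t => if t%:Z <= P i j then 1 else 0)); last first.
    move=> t; rewrite mem_iota => /andP[ht _].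
    exact: (phi_alpha_It hz hgc ho0 ht hij).
  rewrite sum_count.
  have hx0 : 0 <= P i j by rewrite -(PnE P o0) (Pn_ge0 lam_nonneg hz h0 hgc ho0).
  have hxL : P i j <= lam o0 by rewrite -(PnE P o0) (Pn_le lam_nonincr lam_nonneg hz h0 hgc ho0).
  rewrite -(gez0_abs hx0) hL lez_nat in hxL.
  rewrite (@eq_in_count _ _ (fun t => (0 < t) && (t <= `|P i j|%N))%N); last first.
    move=> t; rewrite mem_iota => /andP[ht _].
    by rewrite -{1}(gez0_abs hx0) lez_nat ht.
  by rewrite count_itv ?hxL // subn0 gez0_abs.
by rewrite mxE ltnNge hij /= hz.
Qed.
End Helpers.
Import Helpers.

Theorem mainTheorem5 (n : nat) (lam : 'I_n -> int)
    (lam_nonincr : forall i j : 'I_n, (i <= j)%N -> lam j <= lam i)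
    (lam_nonneg : forall i : 'I_n, 0 <= lam i) :
  (* phi maps Upsilon_lambda into Pi_lambda *)
  (forall A, Upsilon lam A -> Pi lam (phi A)) /\
  (* injectively *)
  (forall A B, Upsilon lam A -> Upsilon lam B -> phi A = phi B -> A = B) /\
  (* and onto Pi_lambda *)
  (forall P, Pi lam P -> exists A, Upsilon lam A /\ phi A = P) /\
  (* in particular phi identifies conv(Upsilon_lambda) with P_lambda = conv(Pi_lambda) *)
  (forall R : realFieldType,
     (forall x : 'M[R]_n, conv (intmx_set (R:=R) (Upsilon lam)) x ->
        conv (intmx_set (R:=R) (Pi lam)) (phi x)) /\
     (forall y : 'M[R]_n, conv (intmx_set (R:=R) (Pi lam)) y ->
        exists x, conv (intmx_set (R:=R) (Upsilon lam)) x /\ phi x = y) /\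
     (forall x x' : 'M[R]_n, conv (intmx_set (R:=R) (Upsilon lam)) x ->
        conv (intmx_set (R:=R) (Upsilon lam)) x' -> phi x = phi x' -> x = x')).
Proof.
have P1 : forall A, Upsilon lam A -> Pi lam (phi A).
  by move=> A; apply: Pi_of_Upsilon.
have P2 : forall A B, Upsilon lam A -> Upsilon lam B -> phi A = phi B -> A = B.
  move=> A B hA hB; exact: phi_inj (Upsilon_tri hA) (Upsilon_tri hB).
have P3 : forall P, Pi lam P -> exists A, Upsilon lam A /\ phi A = P.
  by move=> P; apply: onto.
split => //; split => //; split => // R.
split; [|split].
- move=> x [m [w [p [hw [hs [hp ->]]]]]].
  exists m, w, (fun t => phi (p t)); split => //; split => //; split.
    move=> t; case: (hp t) => A [hA ->]; exists (phi A); split; first exact: P1.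
    exact: phi_map.
  rewrite phi_sum; apply: eq_bigr => t _; exact: phiZ.
- move=> y [m [w [p [hw [hs [hp ->]]]]]].
  have : forall t, exists A : 'M[int]_n, Upsilon lam A /\
      map_mx (fun z : int => z%:~R : R) (phi A) = p t.
    move=> t; case: (hp t) => Q [hQ ->]; case: (P3 Q hQ) => A [hA <-].
    by exists A.
  case/fin_all_exists => Af hAf.
  exists (\sum_t w t *: map_mx (fun z : int => z%:~R : R) (Af t)); split.
    exists m, w, (fun t => map_mx (fun z : int => z%:~R : R) (Af t)).
    split => //; split => //; split => // t.
    by exists (Af t); split => //; exact: (hAf t).1.
  rewrite phi_sum; apply: eq_bigr => t _.
  by rewrite phiZ phi_map (hAf t).2.
- have Htri : forall x : 'M[R]_n, conv (intmx_set (R:=R) (Upsilon lam)) x -> tri x.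
    move=> x [m [w [p [_ [_ [hp ->]]]]]] i j hij.
    rewrite summxE big1 // => t _; rewrite mxE.
    by case: (hp t) => A [hA ->]; rewrite mxE (Upsilon_tri hA) // mulr0z mulr0.
  move=> x x' hx hx'; exact: phi_inj (Htri x hx) (Htri x' hx').
Qed.
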